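(* Let $m\in\mathbb N$, $M\in{\rm Mat}_m(\mathbb Z)$, and $n_1,n_2\in\mathbb N$ with $\gcd(n_1,n_2)=1$. Then $\Gamma_{M,\,n_1n_2}$ is isomorphic (as a directed graph) to the tensor product $\Gamma_{M,\,n_1}\times\Gamma_{M,\,n_2}$.
   Context: $\mathbb N$ is the set of positive integers and $\mathbb Z_n$ the integers modulo $n$. For $M\in{\rm Mat}_m(\mathbb Z)$, the move graph $\Gamma_{M,\,n}$ is the directed graph with vertex set $\mathbb Z_n^m$ and arc set $\{({\bf x},{\bf y}) : {\bf y}^T=M{\bf x}^T \text{ in } \mathbb Z_n^m\}$ (loops allowed). The tensor product $\Delta_1\times\Delta_2$ of directed graphs is the directed graph whose adjacency matrix is the Kronecker product of the adjacency matrices of $\Delta_1$ and $\Delta_2$; equivalently, its vertex set is $V(\Delta_1)\times V(\Delta_2)$ and $((u_1,u_2),(w_1,w_2))$ is an arc iff $(u_1,w_1)$ is an arc of $\Delta_1$ and $(u_2,w_2)$ is an arc of $\Delta_2$. *)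

(* Defs.v *)
From mathcomp Require Import all_boot all_order all_algebra.
Set Implicit Arguments. Unset Strict Implicit. Unset Printing Implicit Defensive.
Import GRing.Theory Num.Theory.
Local Open Scope ring_scope.

(* A directed graph (loops allowed) on a finite vertex type: an arc relation. *)

(* Vertices of Gamma_{M,n}: vectors in Z_n^m, represented as finite functions
   'I_m -> 'I_n (residues 0..n-1), valid for every n >= 1. *)
Definition zvec (m n : nat) := {ffun 'I_m -> 'I_n}.

(* Arc (x,y) of the move graph Gamma_{M,n}: y^T = M x^T in Z_n^m, i.e. for each
   coordinate i, y_i is the residue of sum_j M_ij x_j modulo n. *)
Definition move_arc (m n : nat) (M : 'M[int]_m) : rel (zvec m n) :=
  fun x y => [forall i : 'I_m,
    (Posz (y i : nat) == ((\sum_(j < m) M i j * Posz (x j : nat)) %% Posz n)%Z)].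

Definition tensor_arc (T1 T2 : finType) (e1 : rel T1) (e2 : rel T2)
  : rel (T1 * T2) :=
  fun u w => e1 u.1 w.1 && e2 u.2 w.2.

Definition digraph_iso (T1 T2 : finType) (e1 : rel T1) (e2 : rel T2) : Prop :=
  exists f : T1 -> T2, bijective f /\ forall x y, e1 x y = e2 (f x) (f y).

(* Main.v *)
Require Import Defs.
From mathcomp Require Import all_boot all_order all_algebra.

Import GRing.Theory Num.Theory.

Local Open Scope ring_scope.

Lemma sum_modz (m : nat) (a b c : 'I_m -> int) (d : int) :
  (forall j, (b j = c j %[mod d])%Z) ->
  ((\sum_(j < m) a j * b j) = (\sum_(j < m) a j * c j) %[mod d])%Z.
Proof.
move=> H; elim/big_rec2: _ => // j u v _ Huv.
by rewrite -modzDm Huv -modzMmr H modzMmr modzDm.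
Qed.

Lemma inord_mod (k : nat) (a : nat) :
  Posz (@inord k (a %% k.+1)%N : nat) = (Posz a %% Posz k.+1)%Z.
Proof. by rewrite inordK ?ltn_pmod // modz_nat. Qed.

Lemma modz_dvdm (a n d : int) : (d %| n)%Z -> modz (modz a n) d = modz a d.
Proof.
move=> dn; apply/eqP; rewrite eqz_mod_dvd.
have -> : modz a n - a = - (divz a n * n) by rewrite {2}(divz_eq a n) opprD addrCA subrr addr0.
by rewrite rpredN dvdz_mull.
Qed.

Theorem theorem3p4 (m : nat) (M : 'M[int]_m) (n1 n2 : nat) :
  (0 < m)%N -> (0 < n1)%N -> (0 < n2)%N -> coprime n1 n2 ->
  digraph_iso (@move_arc m (n1 * n2)%N M)
              (tensor_arc (@move_arc m n1 M) (@move_arc m n2 M)).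
Proof.
move=> _; case: n1 => // k1 _; case: n2 => // k2 _ co.
set n := (k1.+1 * k2.+1)%N.
pose f1 (x : zvec m n) : zvec m k1.+1 := [ffun i => inord (x i %% k1.+1)].
pose f2 (x : zvec m n) : zvec m k2.+1 := [ffun i => inord (x i %% k2.+1)].
exists (fun x => (f1 x, f2 x)); split.
  apply: inj_card_bij.
    move=> x y [] /ffunP H1 /ffunP H2; apply/ffunP => i.
    have := H1 i; have := H2 i; rewrite !ffunE => /(congr1 (@nat_of_ord _)) e2 /(congr1 (@nat_of_ord _)) e1.
    rewrite !inordK ?ltn_pmod // in e1 e2.
    apply/val_inj/eqP => /=.
    have : (x i == y i %[mod n])%N by rewrite chinese_remainder // e1 e2 !eqxx.
    by rewrite !modn_small.
  by rewrite card_prod !card_ffun !card_ord expnMn.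
move=> x y; rewrite /tensor_arc /move_arc /=.
have Hco : coprimez (Posz k1.+1) (Posz k2.+1) by rewrite coprimezE.
apply/idP/idP.
  move/forallP=> HH; apply/andP; split; apply/forallP => i; move/eqP: (HH i).
    rewrite ffunE inord_mod => ->; rewrite modz_dvdm ?PoszM ?dvdz_mulr //;
    apply/eqP; apply: sum_modz => j; rewrite ffunE inord_mod modz_mod //.
    rewrite ffunE inord_mod => ->; rewrite modz_dvdm ?PoszM ?dvdz_mull //;
    apply/eqP; apply: sum_modz => j; rewrite ffunE inord_mod modz_mod //.
move=> /andP[/forallP H1 /forallP H2]; apply/forallP => i.
set S := \sum_(j < m) M i j * Posz (x j : nat).
have e1 : modz (Posz (y i : nat)) (Posz k1.+1) = modz S (Posz k1.+1).
  move/eqP: (H1 i); rewrite ffunE inord_mod => ->.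
  by apply: sum_modz => j; rewrite ffunE inord_mod modz_mod.
have e2 : modz (Posz (y i : nat)) (Posz k2.+1) = modz S (Posz k2.+1).
  move/eqP: (H2 i); rewrite ffunE inord_mod => ->.
  by apply: sum_modz => j; rewrite ffunE inord_mod modz_mod.
have : modz (Posz (y i : nat)) (Posz k1.+1 * Posz k2.+1) == modz S (Posz k1.+1 * Posz k2.+1).
  by rewrite zchinese_remainder // e1 e2 !eqxx.
by rewrite -PoszM modz_small // ltz_nat ltn_ord.
Qed.
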